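(* Let $\mathcal{Y}$ be a subset of a Euclidean space $\mathbb{R}^d$, let $\mathfrak{C}$ be a polyhedral cover of $\mathcal{Y}$, and let $\mathcal{G}=\{g_1,\ldots,g_k\}$ be a vertex interpolation function basis for $\mathfrak{C}$. Define $\boldsymbol{g}:\bigcup_{C\in\mathfrak{C}}C\to\mathbb{R}^k$ by $\boldsymbol{g}(\boldsymbol{x}):=(g_1(\boldsymbol{x}),\ldots,g_k(\boldsymbol{x}))^\top$. If $V(\mathfrak{C})\subseteq\mathcal{Y}$, then $$\operatorname{conv}(\boldsymbol{g}(\mathcal{Y}))=\Big\{(z_1,\ldots,z_k)^\top:z_1\ge0,\ldots,z_k\ge0,\ \textstyle\sum_{j=1}^kz_j\le1\Big\},$$ i.e. $\operatorname{conv}(\boldsymbol{g}(\mathcal{Y}))$ is the $k$-simplex with vertices $\boldsymbol{0},\boldsymbol{e}_1,\ldots,\boldsymbol{e}_k$, where $\boldsymbol{e}_j$ is the $j$-th standard basis vector of $\mathbb{R}^k$.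
   Context: A convex $C'\subseteq C$ is a face of a convex set $C$ if $\lambda x_1+(1-\lambda)x_2\in C'$ with $0<\lambda<1$, $x_1,x_2\in C$ implies $x_1,x_2\in C'$; $x$ is an extreme point if $\{x\}$ is a face. A polyhedron is a finite intersection of closed half-spaces. A polyhedral cover of $\mathcal{Y}\subseteq\mathbb{R}^d$ is a finite collection $\mathfrak{C}$ of polyhedra, each with at least one extreme point, with $\bigcup_{C\in\mathfrak{C}}C\supseteq\mathcal{Y}$, such that whenever $C_1,C_2\in\mathfrak{C}$ intersect, $C_1\cap C_2$ is a face of both. $V(C)$ denotes the set of extreme points of $C$, $V(\mathfrak{C}):=\bigcup_{C\in\mathfrak{C}}V(C)$, and $\mathfrak{F}(\mathfrak{C})$ the set of non-empty faces of members of $\mathfrak{C}$. A vertex interpolation function set for $\mathfrak{C}$ is a family $\{g_{\boldsymbol{v}}:\bigcup_{C\in\mathfrak{C}}C\to\mathbb{R}\}_{\boldsymbol{v}\in V(\mathfrak{C})}$ with: (VIF1) $g_{\boldsymbol{v}}\ge0$; (VIF2) $g_{\boldsymbol{v}}(\boldsymbol{v}')=\mathbf{1}_{\{\boldsymbol{v}=\boldsymbol{v}'\}}$ for all $\boldsymbol{v},\boldsymbol{v}'\in V(\mathfrak{C})$; (VIF3) $\sum_{\boldsymbol{v}\in V(F)}g_{\boldsymbol{v}}(\boldsymbol{x})=1$ for every $F\in\mathfrak{F}(\mathfrak{C})$, $\boldsymbol{x}\in F$; (VIF4) $g_{\boldsymbol{v}}(\boldsymbol{x})=0$ for every $F\in\mathfrak{F}(\mathfrak{C})$,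 $\boldsymbol{x}\in F$, $\boldsymbol{v}\in V(\mathfrak{C})\setminus V(F)$. A vertex interpolation function basis for $\mathfrak{C}$ is a set consisting of all but one of the functions of some vertex interpolation function set for $\mathfrak{C}$. *)

(* Defs.v *)
From HB Require Import structures.
From mathcomp Require Import all_boot all_order all_algebra.
From mathcomp Require Import boolp classical_sets functions fsbigop reals.
Set Implicit Arguments. Unset Strict Implicit. Unset Printing Implicit Defensive.
Import Order.TTheory GRing.Theory Num.Theory.
Local Open Scope classical_set_scope.
Local Open Scope ring_scope.

Section Defs.
Variable R : realType.
Variable d : nat.
Local Notation pt := 'rV[R]_d.

Definition dotp (a x : pt) : R := \sum_(i < d) a 0 i * x 0 i.

Definition is_convex (C : set pt) : Prop :=
  forall x1 x2 (l : R), C x1 -> C x2 -> 0 <= l <= 1 ->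
    C (l *: x1 + (1 - l) *: x2).

Definition is_face (C C' : set pt) : Prop :=
  [/\ is_convex C', C' `<=` C &
   forall x1 x2 (l : R), C x1 -> C x2 -> 0 < l < 1 ->
     C' (l *: x1 + (1 - l) *: x2) -> C' x1 /\ C' x2].

Definition extreme_points (C : set pt) : set pt :=
  [set x | is_face C [set x]].

Definition is_polyhedron (C : set pt) : Prop :=
  exists (m : nat) (A : 'I_m -> pt) (b : 'I_m -> R),
    C = [set x | forall i, dotp (A i) x <= b i].

Definition cover_union (Cs : seq (set pt)) : set pt :=
  [set x | exists2 C, C \in Cs & C x].

Definition polyhedral_cover (Y : set pt) (Cs : seq (set pt)) : Prop :=
  [/\ forall C, C \in Cs -> is_polyhedron C /\ extreme_points C !=set0,
      Y `<=` cover_union Cs &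
      forall C1 C2, C1 \in Cs -> C2 \in Cs -> C1 `&` C2 !=set0 ->
        is_face C1 (C1 `&` C2) /\ is_face C2 (C1 `&` C2)].

Definition cover_vertices (Cs : seq (set pt)) : set pt :=
  [set v | exists2 C, C \in Cs & extreme_points C v].

Definition cover_faces (Cs : seq (set pt)) : set (set pt) :=
  [set F | F !=set0 /\ exists2 C, C \in Cs & is_face C F].

(* vertex interpolation function set {g_v}_{v in V(frak C)}; the functions are
   total on R^d but only their values on the union of the cover matter *)
Definition is_VIF_set (Cs : seq (set pt)) (g : pt -> pt -> R) : Prop :=
  let V := cover_vertices Cs in
  [/\ (forall v x, V v -> cover_union Cs x -> 0 <= g v x),
      (forall v v', V v -> V v' -> g v v' = (v == v')%:R),
      (forall F x, cover_faces Cs F -> F x ->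
         (\sum_(v \in extreme_points F) g v x) = 1) &
      (forall F x v, cover_faces Cs F -> F x -> V v ->
         ~ extreme_points F v -> g v x = 0)].

(* {g_1,...,g_k} is a vertex interpolation function basis: it is an
   enumeration (without repetition) of all functions but one of some
   vertex interpolation function set *)
Definition is_VIF_basis (Cs : seq (set pt)) (k : nat) (gs : 'I_k -> pt -> R)
  : Prop :=
  exists (g : pt -> pt -> R) (v0 : pt) (vs : 'I_k -> pt),
    [/\ is_VIF_set Cs g,
        cover_vertices Cs v0 /\ injective vs,
        (forall j, cover_vertices Cs (vs j) /\ vs j <> v0),
        (forall v, cover_vertices Cs v -> v <> v0 -> exists j, vs j = v) &
        (forall j x, cover_union Cs x -> gs j x = g (vs j) x)].

End Defs.

Definition conv_hull (R : realType) (n : nat) (S : set 'rV[R]_n) : set 'rV[R]_n :=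
  [set z | exists (m : nat) (w : 'I_m -> R) (p : 'I_m -> 'rV[R]_n),
     [/\ forall i, 0 <= w i, \sum_(i < m) w i = 1, forall i, S (p i) &
         z = \sum_(i < m) w i *: p i]].

Definition std_simplex (R : realType) (k : nat) : set 'rV[R]_k :=
  [set z | (forall j, 0 <= z 0 j) /\ \sum_(j < k) z 0 j <= 1].

Definition gvec (R : realType) (d k : nat) (gs : 'I_k -> 'rV[R]_d -> R)
  (x : 'rV[R]_d) : 'rV[R]_k := \row_(j < k) gs j x.

(* Main.v *)
Require Import Defs.
From mathcomp Require Import all_boot all_order all_algebra.
From mathcomp Require Import boolp classical_sets functions fsbigop reals.
From mathcomp Require Import cardinality ring lra.
Set Implicit Arguments. Unset Strict Implicit. Unset Printing Implicit Defensive.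
Import Order.TTheory GRing.Theory Num.Theory.
Local Open Scope classical_set_scope.
Local Open Scope ring_scope.

Lemma sum_sub_uniq (R : numDomainType) (T : eqType) (s t : seq T) (F : T -> R) :
  uniq s -> uniq t -> {subset t <= s} -> (forall x, x \in s -> 0 <= F x) ->
  \sum_(x <- t) F x <= \sum_(x <- s) F x.
Proof.
move=> us ut ts F0.
have pe : perm_eq s (t ++ [seq x <- s | x \notin t]).
  apply: uniq_perm => //.
    rewrite cat_uniq ut filter_uniq // andbT /=.
    by apply/hasPn => x; rewrite mem_filter => /andP[].
  move=> x; rewrite mem_cat mem_filter.
  by case: (boolP (x \in t)) => //= /ts ->.
rewrite (perm_big _ pe) big_cat /= lerDl big_filter big_seq_cond.
by apply: sumr_ge0 => x /andP[xs _]; exact: F0.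
Qed.

Section S.
Variables (R : realType) (d : nat).
Local Notation pt := 'rV[R]_d.

Lemma ext_in (C : set pt) v : extreme_points C v -> C v.
Proof. by case=> _ sub _; apply: sub. Qed.

Lemma poly_convex (C : set pt) : is_polyhedron C -> is_convex C.
Proof.
case=> m [A [b ->]] x1 x2 l /= h1 h2 /andP[l0 l1] i.
have -> : dotp (A i) (l *: x1 + (1 - l) *: x2) =
    l * dotp (A i) x1 + (1 - l) * dotp (A i) x2.
  rewrite /dotp !mulr_sumr -big_split; apply: eq_bigr => t _.
  by rewrite !mxE mulrDr !mulrA [_ * l]mulrC [_ * (1 - l)]mulrC.
have e1 := ler_wpM2l l0 (h1 i).
have e2 := ler_wpM2l (ltac:(by rewrite subr_ge0) : 0 <= 1 - l) (h2 i).
apply: le_trans (lerD e1 e2) _.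
by rewrite -mulrDl addrC subrK mul1r.
Qed.

Lemma face_self (C : set pt) : is_convex C -> is_face C C.
Proof. by move=> cC; split. Qed.

End S.

Theorem proposition3p8 (R : realType) (d : nat) (Y : set 'rV[R]_d)
  (Cs : seq (set 'rV[R]_d)) (k : nat) (gs : 'I_k -> 'rV[R]_d -> R) :
  polyhedral_cover Y Cs ->
  is_VIF_basis Cs gs ->
  cover_vertices Cs `<=` Y ->
  conv_hull (gvec gs @` Y) = @std_simplex R k.
Proof.
move=> [Hpoly Hcov Hint] [g [v0 [vs [[H1 H2 H3 H4] [Vv0 vsinj] Hvs Hsurj Hgs]]]] HVY.
have Vun v : cover_vertices Cs v -> cover_union Cs v.
  by case=> C CC /ext_in Cv; exists C.
have key y : Y y -> (forall j, 0 <= gs j y) /\ \sum_(j < k) gs j y <= 1.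
  move=> Yy; have uy := Hcov _ Yy; case: (uy) => C CC Cy.
  split=> [j|]; first by rewrite Hgs //; apply: H1 => //; case: (Hvs j).
  have FC : cover_faces Cs C.
    split; first by exists y.
    exists C => //; apply: face_self; apply: poly_convex; exact: (Hpoly C CC).1.
  have := H3 C y FC Cy.
  set s := finite_support _ _ _.
  have [fin|inf] := pselect (finite_set (extreme_points C `&`
      (fun v => g v y) @^-1` [set~ 0])); last first.
    by rewrite /s no_finite_support // big_nil => /eqP; rewrite eq_sym oner_eq0.
  have sE := in_finite_support fin; rewrite -/s in sE.
  move=> <-.
  pose P := fun j => g (vs j) y != 0.
  have -> : \sum_(j < k) gs j y = \sum_(v <- map vs (filter P (index_enum 'I_k))) g v y.
    rewrite big_map big_filter [RHS]big_mkcond; apply: eq_bigr => j _.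
    rewrite Hgs // /P; by case: eqP.
  apply: sum_sub_uniq.
  - by rewrite /s; exact: finite_support_uniq.
  - by rewrite map_inj_uniq // filter_uniq // index_enum_uniq.
  - move=> v /mapP[j]; rewrite mem_filter => /andP[Pj _] ->.
    rewrite sE; apply/mem_set; split => //=; last exact/eqP.
    apply: contrapT => next; move: Pj; rewrite /P (H4 C y (vs j)) ?eqxx //.
    by case: (Hvs j).
  - move=> v; rewrite sE => /set_mem [ev _]; apply: H1 => //; by exists C.
apply/seteqP; split.
- move=> z [m [w [p [w0 w1 pY ->]]]]; split.
    move=> j; rewrite summxE; apply: sumr_ge0 => i _; rewrite mxE.
    have [y Yy <-] := pY i; rewrite mxE; apply: mulr_ge0 => //.
    exact: (key y Yy).1.
  under eq_bigr do rewrite summxE.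
  rewrite exchange_big /= -w1; apply: ler_sum => i _.
  have [y Yy <-] := pY i.
  under eq_bigr do rewrite !mxE.
  rewrite -mulr_sumr; apply: ler_piMr => //; exact: (key y Yy).2.
- move=> z [z0 z1].
  exists k.+1.
  exists (fun i : 'I_k.+1 => if unlift ord0 i is Some j then z 0 j
                             else 1 - \sum_(j < k) z 0 j).
  exists (fun i : 'I_k.+1 => if unlift ord0 i is Some j then gvec gs (vs j)
                             else gvec gs v0).
  split.
  - by move=> i; case: unlift => [j|]; rewrite ?subr_ge0.
  - rewrite big_ord_recl unlift_none.
    rewrite [X in _ + X](eq_bigr (fun j => z 0 j)) => [|j _]; last by rewrite fintype.liftK.
    by rewrite subrK.
  - move=> i; case: unlift => [j|]; [exists (vs j)|exists v0] => //.
      by apply: HVY; case: (Hvs j).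
    exact: HVY.
  - rewrite big_ord_recl unlift_none.
    rewrite [X in _ = _ + X](eq_bigr (fun j => z 0 j *: gvec gs (vs j))) => [|j _]; last by rewrite fintype.liftK.
    have g0 : gvec gs v0 = 0.
      apply/rowP => j; rewrite !mxE Hgs; last exact: Vun.
      rewrite H2 //; last by case: (Hvs j).
      by case: eqP => // /(Hvs j).2.
    rewrite g0 scaler0 add0r; apply/rowP => j; rewrite summxE.
    rewrite (bigD1 j) //= big1 ?addr0.
      rewrite !mxE Hgs; last by apply: Vun; case: (Hvs j).
      by rewrite H2 ?eqxx ?mulr1 //; case: (Hvs j).
    move=> i /negbTE ij; rewrite !mxE Hgs; last by apply: Vun; case: (Hvs i).
    rewrite H2; [|exact: (Hvs j).1|exact: (Hvs i).1].
    by rewrite (inj_eq vsinj) eq_sym ij mulr0.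
Qed.
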